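(* Every $y=(y^1,y^2,y^3)\in\mathbb T^3$ such that $y^i\in\{0,\tfrac12\}$ (mod 1) for some $i\in\{1,2,3\}$ belongs to the no-collision region $\mathfrak I$.
   Context: $\mathbb{T}=\mathbb R/\mathbb Z$, $\mathbb{T}^3=\mathbb{R}^3/\mathbb{Z}^3$; $\omega(k)=\omega_0+\sum_{j=1}^3 2(1-\cos(2\pi k^j))$ with fixed $2<\omega_0<3$. Two wave vectors $x,y\in\mathbb{T}^3$ are connected by one collision if $\omega(y)=\omega(x)+\omega(y-x)$, or $\omega(x)=\omega(y)+\omega(x-y)$, or $\omega(x+y)=\omega(x)+\omega(y)$. The no-collision region $\mathfrak I$ is the set of $x\in\mathbb T^3$ such that no $y\in\mathbb T^3$ is connected to $x$ by one collision. *)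

(* Defs.v *)
From Stdlib Require Import Reals.
Open Scope R_scope.

(* A point of T^3 = R^3/Z^3 is represented by any real lift (k1,k2,k3);
   omega is Z^3-periodic and the collision relations only use sums and
   differences, so every notion below is well defined on the torus. *)
Definition vec3 : Type := (R * R * R)%type.

Definition comp1 (k : vec3) : R := fst (fst k).
Definition comp2 (k : vec3) : R := snd (fst k).
Definition comp3 (k : vec3) : R := snd k.

Definition vadd (x y : vec3) : vec3 := (comp1 x + comp1 y, comp2 x + comp2 y, comp3 x + comp3 y).
Definition vsub (x y : vec3) : vec3 := (comp1 x - comp1 y, comp2 x - comp2 y, comp3 x - comp3 y).

Definition omega (w0 : R) (k : vec3) : R :=
  w0 + (2 * (1 - cos (2 * PI * comp1 k))
        + 2 * (1 - cos (2 * PI * comp2 k))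
        + 2 * (1 - cos (2 * PI * comp3 k))).

Definition connected (w0 : R) (x y : vec3) : Prop :=
  omega w0 y = omega w0 x + omega w0 (vsub y x) \/
  omega w0 x = omega w0 y + omega w0 (vsub x y) \/
  omega w0 (vadd x y) = omega w0 x + omega w0 y.

Definition no_collision (w0 : R) (x : vec3) : Prop :=
  forall y : vec3, ~ connected w0 x y.

Definition zero_or_half_mod1 (t : R) : Prop :=
  exists n : Z, t = IZR n \/ t = IZR n + / 2.

(* Main.v *)
Require Import Defs.
From Stdlib Require Import Reals Lra Lia ZArith.
Open Scope R_scope.

Lemma cos_perZ (x : R) (n : Z) : cos (x + 2 * PI * IZR n) = cos x.
Proof.
  destruct (Z_le_gt_dec 0 n) as [H|H].
  - rewrite <- (Z2Nat.id n H), <- INR_IZR_INZ.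
    replace (x + 2 * PI * INR (Z.to_nat n)) with (x + 2 * INR (Z.to_nat n) * PI) by ring.
    apply cos_period.
  - assert (E : n = (- Z.of_nat (Z.to_nat (- n)))%Z) by lia.
    rewrite E, opp_IZR, <- INR_IZR_INZ.
    set (k := Z.to_nat (-n)).
    rewrite <- (cos_period (x + 2 * PI * - INR k) k). f_equal. ring.
Qed.

Lemma zh_shift (t : R) : zero_or_half_mod1 t ->
  exists s, (s = 1 \/ s = -1) /\ forall x, cos (2 * PI * t + x) = s * cos x.
Proof.
  intros [n [H|H]]; subst t.
  - exists 1. split; [left; reflexivity|]. intros x.
    replace (2 * PI * IZR n + x) with (x + 2 * PI * IZR n) by ring.
    rewrite cos_perZ. ring.
  - exists (-1). split; [right; reflexivity|]. intros x.
    replace (2 * PI * (IZR n + / 2) + x) with ((x + PI) + 2 * PI * IZR n) by field.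
    rewrite cos_perZ, neg_cos. ring.
Qed.

Definition F (u v : R) := cos u + cos v - cos (u + v).

Lemma F_bound (u v : R) : F u v <= 3/2.
Proof.
  unfold F.
  set (s := (u + v) / 2). set (d := (u - v) / 2).
  replace u with (s + d) by (unfold s, d; field).
  replace v with (s - d) at 1 by (unfold s, d; field).
  replace (s + d + v) with (2 * s) by (unfold s, d; field).
  rewrite cos_plus, cos_minus, cos_2a_cos.
  pose proof (COS_bound d). pose proof (COS_bound s).
  pose proof (pow2_ge_0 (2 * cos s - cos d)).
  assert (cos d * cos d <= 1) by nra.
  nra.
Qed.

Lemma F_special (t u v : R) : zero_or_half_mod1 t ->
  (2 * PI * t = u \/ 2 * PI * t = v \/ 2 * PI * t = u + v) -> F u v <= 1.
Proof.
  intros Ht Hc. destruct (zh_shift t Ht) as [s [Hs Hx]].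
  unfold F. pose proof (COS_bound u). pose proof (COS_bound v).
  assert (Hc0 := Hx 0). rewrite Rplus_0_r, cos_0 in Hc0.
  destruct Hc as [E|[E|E]].
  - rewrite <- E, Hx, Hc0. destruct Hs; subst s; lra.
  - replace (u + v) with (2 * PI * t + u) by lra. rewrite <- E, Hx, Hc0.
    destruct Hs; subst s; lra.
  - rewrite <- E, Hc0.
    replace v with (2 * PI * t + - u) by lra. rewrite Hx, cos_neg.
    destruct Hs; subst s; lra.
Qed.

Definition spec (y : vec3) :=
  zero_or_half_mod1 (comp1 y) \/ zero_or_half_mod1 (comp2 y) \/ zero_or_half_mod1 (comp3 y).

Lemma key (w0 : R) (hw : 2 < w0) (p q r : vec3) :
  comp1 r = comp1 p + comp1 q -> comp2 r = comp2 p + comp2 q -> comp3 r = comp3 p + comp3 q ->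
  (spec p \/ spec q \/ spec r) ->
  omega w0 r <> omega w0 p + omega w0 q.
Proof.
  intros E1 E2 E3 Hs Heq. unfold omega in Heq.
  rewrite E1, E2, E3 in Heq.
  rewrite !Rmult_plus_distr_l in Heq.
  pose proof (F_bound (2*PI*comp1 p) (2*PI*comp1 q)) as B1.
  pose proof (F_bound (2*PI*comp2 p) (2*PI*comp2 q)) as B2.
  pose proof (F_bound (2*PI*comp3 p) (2*PI*comp3 q)) as B3.
  assert (S : F (2*PI*comp1 p) (2*PI*comp1 q) <= 1 \/ F (2*PI*comp2 p) (2*PI*comp2 q) <= 1
              \/ F (2*PI*comp3 p) (2*PI*comp3 q) <= 1).
  { unfold spec in Hs.
    destruct Hs as [[H|[H|H]]|[[H|[H|H]]|[H|[H|H]]]];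
    [left|right;left|right;right|left|right;left|right;right|left|right;left|right;right];
    eapply F_special; try exact H; try (left; reflexivity); try (right; left; reflexivity);
    right; right; rewrite ?E1, ?E2, ?E3; ring. }
  unfold F in *. destruct S as [S|[S|S]]; lra.
Qed.

Theorem mainTheorem9 (w0 : R) (hw0 : 2 < w0 < 3) (y : vec3) :
  (zero_or_half_mod1 (comp1 y) \/ zero_or_half_mod1 (comp2 y) \/ zero_or_half_mod1 (comp3 y)) ->
  no_collision w0 y.
Proof.
  intros Hy z [H|[H|H]].
  - refine (key w0 (proj1 hw0) y (vsub z y) z _ _ _ _ H);
      unfold vsub, comp1, comp2, comp3; simpl; try ring. left; exact Hy.
  - refine (key w0 (proj1 hw0) z (vsub y z) y _ _ _ _ H);
      unfold vsub, comp1, comp2, comp3; simpl; try ring. right; right; exact Hy.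
  - refine (key w0 (proj1 hw0) y z (vadd y z) _ _ _ _ H);
      unfold vadd, comp1, comp2, comp3; simpl; try ring. left; exact Hy.
Qed.
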